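(* Let $\|\cdot\|$ be a strictly convex norm on $\mathbb{R}^n$ that is continuously differentiable on $\mathbb{R}^n\setminus\{0\}$, with gradient $N(x)$ at $x\ne0$, and set $h(x,y)=\|y\|-\langle y,N(x)\rangle$ for $x\neq 0$, and $h(0,z)=0$ for all $z$. Suppose $\|\cdot\|$ is geometrically convex with constants $r>0$, $\Lambda>2$, i.e. $$\Lambda\, h(x,x+y)\le h(x,x+2y)\quad\text{for all } x\neq0,\ \|y\|\le r\|x\|.$$ Then for all $x\neq 0$ and $\|y\|\le r\|x\|$, $$h(x,x+2y)\le \frac{\Lambda}{\Lambda-2}\,h(x+2y,x).$$ Equivalently, if $x\ne0$ and $\|z-x\|\le 2r\|x\|$, then $h(x,z)\le \frac{\Lambda}{\Lambda-2}h(z,x)$.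
   Context: $\langle\cdot,\cdot\rangle$ is the Euclidean inner product. Strict convexity of the norm means: if $x,y\neq0$ and $\|x+y\|=\|x\|+\|y\|$, then $y=\alpha x$ for some $\alpha>0$. *)

(* Defs.v *)
From mathcomp Require Import all_boot all_order all_algebra.
From mathcomp Require Import reals.
Set Implicit Arguments. Unset Strict Implicit. Unset Printing Implicit Defensive.
Import Order.TTheory GRing.Theory Num.Theory.
Local Open Scope ring_scope.

Definition dotv (R : realType) (n : nat) (x y : 'rV[R]_n) : R :=
  \sum_(i < n) x 0 i * y 0 i.

Definition enorm (R : realType) (n : nat) (x : 'rV[R]_n) : R :=
  Num.sqrt (dotv x x).

Definition is_norm (R : realType) (n : nat) (nrm : 'rV[R]_n -> R) : Prop :=
  (forall x, 0 <= nrm x) /\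
  (forall x, nrm x = 0 -> x = 0) /\
  (forall (a : R) x, nrm (a *: x) = `|a| * nrm x) /\
  (forall x y, nrm (x + y) <= nrm x + nrm y).

Definition strictly_convex (R : realType) (n : nat) (nrm : 'rV[R]_n -> R) : Prop :=
  forall x y, x != 0 -> y != 0 -> nrm (x + y) = nrm x + nrm y ->
    exists a : R, 0 < a /\ y = a *: x.

Definition has_gradient_at (R : realType) (n : nat) (f : 'rV[R]_n -> R)
    (g : 'rV[R]_n) (x : 'rV[R]_n) : Prop :=
  forall eps : R, 0 < eps -> exists delta : R, 0 < delta /\
    forall v, enorm v < delta ->
      `|f (x + v) - f x - dotv v g| <= eps * enorm v.

Definition continuous_at_vec (R : realType) (n : nat) (F : 'rV[R]_n -> 'rV[R]_n)
    (x : 'rV[R]_n) : Prop :=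
  forall eps : R, 0 < eps -> exists delta : R, 0 < delta /\
    forall z, enorm (z - x) < delta -> enorm (F z - F x) < eps.

Definition C1_gradient_away0 (R : realType) (n : nat) (nrm : 'rV[R]_n -> R)
    (N : 'rV[R]_n -> 'rV[R]_n) : Prop :=
  forall x, x != 0 -> has_gradient_at nrm (N x) x /\ continuous_at_vec N x.

Definition hfun (R : realType) (n : nat) (nrm : 'rV[R]_n -> R)
    (N : 'rV[R]_n -> 'rV[R]_n) (x y : 'rV[R]_n) : R :=
  if x == 0 then 0 else nrm y - dotv y (N x).

Definition geometrically_convex (R : realType) (n : nat) (nrm : 'rV[R]_n -> R)
    (N : 'rV[R]_n -> 'rV[R]_n) (r Lam : R) : Prop :=
  forall x y, x != 0 -> nrm y <= r * nrm x ->
    Lam * hfun nrm N x (x + y) <= hfun nrm N x (x + 2%:R *: y).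

(* Main.v *)
Require Import Defs.
From mathcomp Require Import all_boot all_order all_algebra.
From mathcomp Require Import reals.
From mathcomp Require Import ring lra.
Import Order.TTheory GRing.Theory Num.Theory.
Local Open Scope ring_scope.

Section H.
Variables (R : realType) (n : nat).
Implicit Types (x y g : 'rV[R]_n).

Lemma dotvD x y g : dotv (x + y) g = dotv x g + dotv y g.
Proof. by rewrite /dotv -big_split; apply: eq_bigr => i _; rewrite mxE mulrDl. Qed.

Lemma dotvZ (a : R) x g : dotv (a *: x) g = a * dotv x g.
Proof. by rewrite /dotv mulr_sumr; apply: eq_bigr => i _; rewrite mxE mulrA. Qed.

Lemma dotvN x g : dotv (- x) g = - dotv x g.
Proof. by rewrite -scaleN1r dotvZ mulN1r. Qed.

Lemma dotv_ge0 x : 0 <= dotv x x.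
Proof. by apply: sumr_ge0 => i _; rewrite -expr2 sqr_ge0. Qed.

Lemma enormZ (a : R) x : 0 <= a -> enorm (a *: x) = a * enorm x.
Proof.
move=> ha; rewrite /enorm dotvZ.
have -> : dotv x (a *: x) = a * dotv x x.
  by rewrite /dotv mulr_sumr; apply: eq_bigr => i _; rewrite mxE mulrCA.
by rewrite mulrA -expr2 sqrtrM ?sqr_ge0 // sqrtr_sqr ger0_norm.
Qed.

Lemma enorm_ge0 x : 0 <= enorm x.
Proof. exact: sqrtr_ge0. Qed.

Lemma grad_dir (nrm : 'rV[R]_n -> R) g x w (c : R) :
  has_gradient_at nrm g x ->
  (forall t : R, 0 < t -> t <= 1 -> nrm (x + t *: w) - nrm x <= t * c) ->
  dotv w g <= c.
Proof.
move=> hg hc; apply/ler_addgt0Pr => eps heps.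
set E := enorm w.
have hE : 0 <= E by exact: enorm_ge0.
have hE1 : 0 < E + 1 by lra.
have [d [hd hdv]] := hg (eps / (E + 1)) (divr_gt0 heps hE1).
set t := Num.min 1 (d / (E + 1)).
have ht0 : 0 < t by rewrite lt_min ltr01 divr_gt0.
have ht1 : t <= 1 by rewrite ge_min lexx.
have htd : t <= d / (E + 1) by rewrite ge_min lexx orbT.
have hlt : enorm (t *: w) < d.
  rewrite (enormZ t w (ltW ht0)) //.
  have : t * E <= d / (E + 1) * E by rewrite ler_wpM2r.
  have : d / (E + 1) * E < d.
    by rewrite mulrAC ltr_pdivrMr // ltr_pM2l //; lra.
  rewrite -/E; lra.
have := hdv _ hlt; rewrite dotvZ (enormZ t w (ltW ht0)) // -/E.
rewrite ler_norml => /andP [h1 h2].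
have hct := hc t ht0 ht1.
have key : t * dotv w g <= t * (c + eps / (E + 1) * E).
  lra.
have := key; rewrite ler_pM2l // => key2.
have : eps / (E + 1) * E <= eps.
  rewrite mulrAC ler_pdivrMr //; nra.
lra.
Qed.

End H.
Arguments grad_dir {R n nrm g x w c}.

Lemma arith (R : realType) (Lam a b c m nx nz : R) : 2%:R < Lam ->
  Lam * (m - (nx + a)) <= nz - (nx + 2%:R * a) ->
  c + b <= m -> c = nz - 2%:R * b ->
  nz - (nx + 2%:R * a) <= Lam / (Lam - 2%:R) * (nx - c).
Proof.
move=> hL hg hxy hc.
have hL0 : 0 <= Lam by lra.
have hK : 0 <= nx - c - (nz - (nx + 2%:R * a)) + 2%:R * (m - (nx + a)) by lra.
have hP := mulr_ge0 hL0 hK.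
rewrite mulrAC ler_pdivlMr; last lra.
nra.
Qed.

Theorem lemma4p10 (R : realType) (n : nat) (nrm : 'rV[R]_n -> R)
    (N : 'rV[R]_n -> 'rV[R]_n) (r Lam : R) :
  is_norm nrm -> strictly_convex nrm -> C1_gradient_away0 nrm N ->
  0 < r -> 2%:R < Lam -> geometrically_convex nrm N r Lam ->
  forall x y : 'rV[R]_n, x != 0 -> nrm y <= r * nrm x ->
    hfun nrm N x (x + 2%:R *: y) <=
      Lam / (Lam - 2%:R) * hfun nrm N (x + 2%:R *: y) x.
Proof.
move=> [nge0 [n0 [nZ ntri]]] _ hC1 hr hL hgc x y hx hy.
have nrm0 : nrm 0 = 0 by rewrite -(scale0r (0 : 'rV[R]_n)) nZ normr0 mul0r.
have dual : forall u w, u != 0 -> dotv w (N u) <= nrm w.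
  move=> u w hu; apply: (grad_dir (hC1 u hu).1) => t ht _.
  have := ntri u (t *: w); rewrite nZ (ger0_norm (ltW ht)); lra.
have self : forall u, u != 0 -> dotv u (N u) = nrm u.
  move=> u hu; apply/eqP; rewrite eq_le dual //=.
  have : dotv (- u) (N u) <= - nrm u.
    apply: (grad_dir (hC1 u hu).1) => t ht ht1.
    have -> : u + t *: - u = (1 - t) *: u by rewrite scalerBl scale1r scalerN.
    rewrite nZ ger0_norm; lra.
  rewrite dotvN; lra.
have := hgc x y hx hy.
rewrite /hfun (negbTE hx).
set z := x + 2%:R *: y.
have [->|hz] := eqVneq z 0.
  move=> _; rewrite mulr0 nrm0 /dotv big1 ?subr0 // => i _; by rewrite mxE mul0r.
rewrite !dotvD !dotvZ (self x hx) => hg.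
have hxz : x = z - 2%:R *: y by rewrite /z addrK.
have hzz := self z hz.
have hxy := dual z (x + y) hz.
rewrite dotvD in hxy.
have hc : dotv x (N z) = dotv z (N z) - 2%:R * dotv y (N z).
  by rewrite {1}hxz dotvD dotvN dotvZ.
move: hg hxy hc; rewrite hzz.
apply: arith; lra.
Qed.
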